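(* Let $A$ be a superring, $S\subseteq A$ a Marshall coherent subset, and $a,b,c\in A$. Then (i) $[c]\in[a]+[b]$ in $A/_mS$ iff there is $s\in S$ such that $cs\subseteq aS+bS$; (ii) $[c]\in[a]\cdot[b]$ in $A/_mS$ iff there is $s\in S$ such that $cs\subseteq abS$.
   Context: Multivalued operations are extended to subsets by unions. A superring is a structure $(S,+,\cdot,-,0,1)$ with multivalued addition and multiplication such that $(S,+,-,0)$ is a commutative multigroup, $(S,\cdot,1)$ is a commutative multimonoid, $a\cdot0=\{0\}$, $c(a+b)\subseteq ca+cb$, and $-(ab)=(-a)b=a(-b)$ (multigroup axioms: $c\in ab\Rightarrow a\in c\,r(b)$ and $b\in r(a)c$; $b\in a\cdot1\iff a=b$; $(ab)c\subseteq a(bc)$; $ab=ba$; multimonoid: the last two and $a\in 1\cdot a$). A subset $S$ of a superring $A$ is Marshall coherent if it is multiplicative ($1\in S$, $S\cdot S\subseteq S$) and whenever $x,a\in A$ and $x\in as$ for some $s\in S$, there are $P,Q\subseteq S$ with $xP=aQ$. For $a,b\in A$, $a\sim_S b$ iff there are nonempty $X,Y\subseteq S$ with $aX=bY$; this is an equivalence relation. The Marshall quotient $A/_mS$ is the set of $\sim_S$-classes $[a]$ with: $[c]\in[a]+[b]$ iff there exist $c'\sim c$, $a'\sim a$, $b'\sim b$ with $c'\in a'+b'$; $[c]\in[a][b]$ iff there exist $c'\sim c,a'\sim a,b'\sim b$ with $c'\in a'b'$; $-[a]:=[-a]$; zero $[0]$, unit $[1]$. *)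

(* Defs.v *)
Set Implicit Arguments.

(* A superring.  Multivalued operations are encoded as ternary relations:
   [add a b x] means x ∈ a + b, [mul a b x] means x ∈ a · b. *)
Record superring := SuperRing {
  carrier :> Type;
  add : carrier -> carrier -> carrier -> Prop;
  mul : carrier -> carrier -> carrier -> Prop;
  neg : carrier -> carrier;
  zero : carrier;
  one : carrier;
  add_rev : forall a b c, add a b c -> add c (neg b) a /\ add (neg a) c b;
  add_zero : forall a b, add a zero b <-> a = b;
  add_assoc : forall a b c x y, add a b x -> add x c y ->
                exists z, add b c z /\ add a z y;
  add_comm : forall a b x, add a b x <-> add b a x;
  mul_assoc : forall a b c x y, mul a b x -> mul x c y ->
                exists z, mul b c z /\ mul a z y;
  mul_comm : forall a b x, mul a b x <-> mul b a x;
  mul_one : forall a, mul one a a;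
  mul_zero : forall a x, mul a zero x <-> x = zero;
  mul_distr : forall a b c x y, add a b x -> mul c x y ->
                exists u v, mul c a u /\ mul c b v /\ add u v y;
  neg_mul_l : forall a b x, (exists y, mul a b y /\ x = neg y) <-> mul (neg a) b x;
  neg_mul_r : forall a b x, mul (neg a) b x <-> mul a (neg b) x
}.

Arguments add {s}.
Arguments mul {s}.
Arguments neg {s}.
Arguments zero {s}.
Arguments one {s}.

Section Marshall.
Context {A : superring}.

Definition subset (X Y : A -> Prop) := forall x, X x -> Y x.
Definition nonempty (X : A -> Prop) := exists x, X x.

Definition mul_set (a : A) (X : A -> Prop) : A -> Prop :=
  fun y => exists x, X x /\ mul a x y.
Definition mul_sets (X Y : A -> Prop) : A -> Prop :=
  fun z => exists x y, X x /\ Y y /\ mul x y z.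
Definition add_sets (X Y : A -> Prop) : A -> Prop :=
  fun z => exists x y, X x /\ Y y /\ add x y z.

Definition set_eq (X Y : A -> Prop) := forall x, X x <-> Y x.

Definition multiplicative (S : A -> Prop) :=
  S (@one A) /\ forall s t x, S s -> S t -> mul s t x -> S x.

Definition marshall_coherent (S : A -> Prop) :=
  multiplicative S /\
  forall x a, (exists s, S s /\ mul a s x) ->
    exists P Q, subset P S /\ subset Q S /\ nonempty P /\ nonempty Q /\
                set_eq (mul_set x P) (mul_set a Q).

Definition msim (S : A -> Prop) (a b : A) :=
  exists X Y, subset X S /\ subset Y S /\ nonempty X /\ nonempty Y /\
              set_eq (mul_set a X) (mul_set b Y).

(* [c] ∈ [a] + [b] in A/_m S *)
Definition mq_add (S : A -> Prop) (a b c : A) :=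
  exists c' a' b', msim S c' c /\ msim S a' a /\ msim S b' b /\ add a' b' c'.

(* [c] ∈ [a] · [b] in A/_m S *)
Definition mq_mul (S : A -> Prop) (a b c : A) :=
  exists c' a' b', msim S c' c /\ msim S a' a /\ msim S b' b /\ mul a' b' c'.

End Marshall.

(* Main.v *)
Require Import Defs.

Section H.
Context {A : superring}.
Implicit Types X Y Z W : A -> Prop.

Definition sg (x : A) : A -> Prop := fun t => t = x.
Local Notation M := (@mul_sets A).

Lemma sub_trans X Y Z : subset X Y -> subset Y Z -> subset X Z.
Proof. unfold subset; auto. Qed.

Lemma mono X X' Y Y' : subset X X' -> subset Y Y' -> subset (M X Y) (M X' Y').
Proof.
  intros h1 h2 w (x & y & hx & hy & hm). exists x, y. auto.
Qed.

Lemma commM X Y : subset (M X Y) (M Y X).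
Proof.
  intros w (x & y & hx & hy & hm). exists y, x. repeat split; auto.
  apply mul_comm; auto.
Qed.

Lemma mul_rassoc (a b c z y : A) : mul a z y -> mul b c z ->
  exists x, mul a b x /\ mul x c y.
Proof.
  intros h1 h2. apply mul_comm in h1. apply mul_comm in h2.
  destruct (mul_assoc _ _ _ _ _ _ h2 h1) as (w & hw1 & hw2).
  exists w. split. apply mul_comm; auto. apply mul_comm; auto.
Qed.

Lemma assoc1 X Y Z : subset (M (M X Y) Z) (M X (M Y Z)).
Proof.
  intros w (u & z & (x & y & hx & hy & hm) & hz & hm2).
  destruct (mul_assoc _ _ _ _ _ _ hm hm2) as (t & ht1 & ht2).
  exists x, t. repeat split; auto. exists y, z; auto.
Qed.

Lemma assoc2 X Y Z : subset (M X (M Y Z)) (M (M X Y) Z).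
Proof.
  intros w (x & u & hx & (y & z & hy & hz & hm) & hm2).
  destruct (mul_rassoc _ _ _ _ _ hm2 hm) as (t & ht1 & ht2).
  exists t, z. repeat split; auto. exists x, y; auto.
Qed.

Lemma sub_refl X : subset X X.
Proof. intros x h; exact h. Qed.

Lemma AC4 X Y Z W : subset (M (M X Y) (M Z W)) (M (M X Z) (M Y W)).
Proof.
  eapply sub_trans. apply assoc1.
  eapply sub_trans. apply mono. apply sub_refl. apply assoc2.
  eapply sub_trans. apply mono. apply sub_refl. apply mono. apply commM. apply sub_refl.
  eapply sub_trans. apply mono. apply sub_refl. apply assoc1.
  apply assoc2.
Qed.

Lemma swapM X Y Z : subset (M (M X Y) Z) (M (M X Z) Y).
Proof.
  eapply sub_trans. apply assoc1.
  eapply sub_trans. apply mono. apply sub_refl. apply commM.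
  apply assoc2.
Qed.

Lemma mulset_M a X y : mul_set a X y <-> M (sg a) X y.
Proof.
  split.
  - intros (x & hx & hm). exists a, x. unfold sg; auto.
  - intros (a' & x & ha & hx & hm). unfold sg in ha; subst. exists x; auto.
Qed.

Lemma neg_add_zero (x : A) : add x (neg x) zero.
Proof.
  assert (h : add x zero x) by (apply add_zero; reflexivity).
  destruct (add_rev _ _ _ _ h) as [_ h2]. apply add_comm; auto.
Qed.

Lemma mul_ne (c x : A) : exists u, mul c x u.
Proof.
  assert (h0 : mul c zero zero) by (apply mul_zero; reflexivity).
  destruct (mul_distr _ _ _ _ _ _ (neg_add_zero x) h0) as (u & v & hu & _).
  eauto.
Qed.

Lemma M_sg_ne (x y : A) : exists u, M (sg x) (sg y) u.
Proof.
  destruct (mul_ne x y) as [u hu]. exists u, x, y. unfold sg; auto.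
Qed.

Lemma msim_refl (S : A -> Prop) (a : A) : S one -> msim S a a.
Proof.
  intros h1. exists (sg one), (sg one). unfold subset, sg, nonempty, set_eq.
  repeat split; try (intros; subst; auto); eauto.
Qed.

Lemma coh_msim (S : A -> Prop) (x a s : A) : marshall_coherent S -> S s -> mul a s x ->
  msim S x a.
Proof.
  intros [_ hc] hs hm. destruct (hc x a) as (P & Q & h); eauto.
  exists P, Q; exact h.
Qed.

Lemma msim_sym (S : A -> Prop) (a b : A) : msim S a b -> msim S b a.
Proof.
  intros (X & Y & h1 & h2 & h3 & h4 & h5). exists Y, X. repeat split; auto;
  intros; apply h5; auto.
Qed.

Lemma SS_sub (S : A -> Prop) : multiplicative S -> subset (M S S) S.
Proof.
  intros [_ h] w (x & y & hx & hy & hm). eauto.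
Qed.

Lemma msim_sub (S : A -> Prop) (c' c : A) X Y : set_eq (mul_set c' X) (mul_set c Y) ->
  subset (M (sg c) Y) (M (sg c') X).
Proof.
  intros h w hw. apply mulset_M. apply h. apply mulset_M. exact hw.
Qed.

Lemma sg_sub (S : A -> Prop) (p : A) X : X p -> subset (sg p) X.
Proof. intros h x e; unfold sg in e; subst; auto. Qed.

Lemma msim_sub2 (c' c : A) X Y : set_eq (mul_set c' X) (mul_set c Y) ->
  subset (M (sg c') X) (M (sg c) Y).
Proof.
  intros h w hw. apply mulset_M. apply h. apply mulset_M. exact hw.
Qed.

Lemma part (S : A -> Prop) (a a' : A) X1 Y1 X (p q v u : A) :
  multiplicative S -> subset X S -> subset Y1 S -> S q -> X1 p ->
  set_eq (mul_set a' X1) (mul_set a Y1) ->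
  M X (M (sg p) (sg q)) v -> mul v a' u -> mul_set a S u.
Proof.
  intros hm hX hY hq hp hE hv hu.
  assert (hV : subset (M X (M (sg p) (sg q))) (M (sg p) S)).
  { eapply sub_trans. apply commM.
    eapply sub_trans. apply assoc1.
    apply mono. apply sub_refl.
    eapply sub_trans. apply mono. apply (sg_sub S). exact hq. exact hX.
    apply SS_sub; auto. }
  apply mulset_M.
  assert (h0 : M (sg a') (M (sg p) S) u).
  { exists a', v. unfold sg. repeat split; auto. apply mul_comm; auto. }
  revert h0.
  eapply sub_trans. apply assoc2.
  eapply sub_trans. apply mono. eapply sub_trans. apply mono. apply sub_refl.
  apply (sg_sub S). exact hp. apply msim_sub2. exact hE. apply sub_refl.
  eapply sub_trans. apply assoc1.
  apply mono. apply sub_refl.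
  eapply sub_trans. apply mono. exact hY. apply sub_refl. apply SS_sub; auto.
Qed.

End H.
Notation M := mul_sets.

Theorem lemma4p4 (A : superring) (S : A -> Prop) (a b c : A) :
  marshall_coherent S ->
  (mq_add S a b c <->
     exists s, S s /\ subset (mul_set c (fun t => t = s))
                             (add_sets (mul_set a S) (mul_set b S))) /\
  (mq_mul S a b c <->
     exists s, S s /\ subset (mul_set c (fun t => t = s))
                             (mul_sets (fun u => mul a b u) S)).
Proof.
  intros hc. pose proof hc as [hmS hcoh]. pose proof hmS as [h1 hmul].
  split; split.
  - intros (c' & a' & b' & hc' & ha' & hb' & hadd).
    destruct hc' as (X & Y & hXS & hYS & _ & [s0 hY] & hXY).
    destruct ha' as (X1 & Y1 & hX1S & hY1S & [p hp] & _ & hE1).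
    destruct hb' as (X2 & Y2 & hX2S & hY2S & [q hq] & _ & hE2).
    destruct (mul_ne p q) as [r hr].
    destruct (mul_ne s0 r) as [s hs].
    assert (hr' : M (sg p) (sg q) r) by (exists p, q; unfold sg; auto).
    exists s. split.
    { apply (hmul s0 r s); [apply hYS; exact hY| |exact hs]. apply (hmul p q r); auto. }
    intros y hy. apply mulset_M in hy.
    assert (key : M (sg c') (M X (M (sg p) (sg q))) y).
    { revert y hy.
      eapply sub_trans. apply mono. apply sub_refl.
      apply (sg_sub S s (M (sg s0) (M (sg p) (sg q)))).
      exists s0, r. unfold sg. auto.
      eapply sub_trans. apply assoc2.
      eapply sub_trans. apply mono.
      eapply sub_trans. apply mono. apply sub_refl. apply (sg_sub S). exact hY.
      apply (msim_sub S). exact hXY. apply sub_refl.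
      apply assoc1. }
    destruct key as (c1 & v & ec & hv & hm). unfold sg in ec. subst c1.
    apply mul_comm in hm.
    destruct (mul_distr _ _ _ _ _ _ hadd hm) as (u1 & u2 & hu1 & hu2 & huy).
    exists u1, u2. repeat split; auto.
    + apply (part S a a' X1 Y1 X p q v u1); auto.
    + apply (part S b b' X2 Y2 X q p v u2); auto.
      revert hv. apply mono. apply sub_refl. apply commM.
  - intros (s & hs & hsub).
    destruct (mul_ne c s) as [y hy].
    destruct (hsub y) as (x & z & hx & hz & had). exists s; split; auto.
    destruct hx as (t1 & ht1 & hm1). destruct hz as (t2 & ht2 & hm2).
    exists y, x, z. split; [|split; [|split]]; auto.
    + exact (coh_msim S y c s hc hs hy).
    + exact (coh_msim S x a t1 hc ht1 hm1).
    + exact (coh_msim S z b t2 hc ht2 hm2).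
  - intros (c' & a' & b' & hc' & ha' & hb' & hab).
    destruct hc' as (X & Y & hXS & hYS & _ & [s0 hY] & hXY).
    destruct ha' as (X1 & Y1 & hX1S & hY1S & [p hp] & _ & hE1).
    destruct hb' as (X2 & Y2 & hX2S & hY2S & [q hq] & _ & hE2).
    destruct (mul_ne p q) as [r hr].
    destruct (mul_ne s0 r) as [s hs].
    exists s. split.
    { apply (hmul s0 r s); [apply hYS; exact hY| |exact hs]. apply (hmul p q r); auto. }
    intros y hy. apply mulset_M in hy.
    assert (key : M (M (sg a) (sg b)) S y).
    { revert y hy.
      eapply sub_trans. apply mono. apply sub_refl.
      apply (sg_sub S s (M (sg s0) (M (sg p) (sg q)))).
      exists s0, r. unfold sg. repeat split; auto. exists p, q. unfold sg; auto.
      eapply sub_trans. apply assoc2.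
      eapply sub_trans. apply mono.
      eapply sub_trans. apply mono. apply sub_refl. apply (sg_sub S). exact hY.
      apply (msim_sub S). exact hXY. apply sub_refl.
      eapply sub_trans. apply assoc1.
      eapply sub_trans. apply (mono (sg c') (M (sg a') (sg b'))).
      intros w e. unfold sg in e. subst w. exists a', b'. unfold sg; auto.
      apply commM.
      eapply sub_trans. apply assoc2.
      eapply sub_trans. apply mono. apply AC4. apply sub_refl.
      eapply sub_trans. apply mono. apply mono.
      eapply sub_trans. apply mono. apply sub_refl. apply (sg_sub S). exact hp.
      apply msim_sub2. exact hE1.
      eapply sub_trans. apply mono. apply sub_refl. apply (sg_sub S). exact hq.
      apply msim_sub2. exact hE2. apply sub_refl.
      eapply sub_trans. apply mono. apply AC4. apply sub_refl.
      eapply sub_trans. apply mono. apply mono. apply sub_refl.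
      eapply sub_trans. apply mono. exact hY1S. exact hY2S. apply SS_sub; auto.
      apply sub_refl.
      eapply sub_trans. apply assoc1.
      apply mono. apply sub_refl.
      eapply sub_trans. apply mono. apply sub_refl. exact hXS. apply SS_sub; auto. }
    destruct key as (u & t & (a1 & b1 & ea & eb & hm) & ht & hm2).
    unfold sg in ea, eb. subst a1 b1. exists u, t. auto.
  - intros (s & hs & hsub).
    destruct (mul_ne c s) as [y hy].
    destruct (hsub y) as (u & t & hu & ht & hm). exists s; split; auto.
    destruct (mul_assoc _ _ _ _ _ _ hu hm) as (z & hz1 & hz2).
    exists y, a, z. split; [|split; [|split]]; auto.
    + exact (coh_msim S y c s hc hs hy).
    + apply msim_refl; auto.
    + exact (coh_msim S z b t hc ht hz1).
Qed.
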